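(* Let $H\le G$ be finite groups and $\Sigma$ a group of automorphisms of $G$. If the set $\{(\sigma,g)\in\Sigma\times H:\sigma(g)=g\}$ is $4$-large in the direct product group $\Sigma\times H$, then $\sigma(g)=g$ for all $\sigma\in\Sigma$ and $g\in H$.
   Context: A subset $X$ of a group $K$ is $4$-large in $K$ if the intersection of any $4$ left translates $a_1X\cap a_2X\cap a_3X\cap a_4X$ ($a_i\in K$) is non-empty. *)

(* Defs.v *)
From mathcomp Require Import all_boot all_fingroup.
Set Implicit Arguments. Unset Strict Implicit. Unset Printing Implicit Defensive.
Local Open Scope group_scope.

Definition four_large (T : finGroupType) (K : {group T}) (X : {set T}) : Prop :=
  forall a1 a2 a3 a4 : T, a1 \in K -> a2 \in K -> a3 \in K -> a4 \in K ->
    (a1 *: X) :&: (a2 *: X) :&: (a3 *: X) :&: (a4 *: X) != set0.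

(* Main.v *)
Require Import Defs.
From mathcomp Require Import all_boot all_fingroup.
Local Open Scope group_scope.

Theorem theorem7p2 (gT : finGroupType) (G H : {group gT})
    (Sigma : {group {perm gT}}) :
  H \subset G -> Sigma \subset Aut G ->
  four_large [group of setX Sigma H]
    [set sg in setX Sigma H | sg.1 sg.2 == sg.2] ->
  forall (s : {perm gT}) (g : gT), s \in Sigma -> g \in H -> s g = g.
Proof.
move=> sHG sSA L s g sS gH.
have gG : g \in G by apply: (subsetP sHG).
have ginvG : g^-1 \in G by rewrite groupV.
have mem1 : ((1 : {perm gT}), (1 : gT)) \in setX Sigma H by rewrite in_setX !group1.
have memS : (s, (1 : gT)) \in setX Sigma H by rewrite in_setX sS group1.
have memg : ((1 : {perm gT}), g) \in setX Sigma H by rewrite in_setX group1 gH.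
have memSg : (s, g) \in setX Sigma H by rewrite in_setX sS gH.
have := L _ _ _ _ mem1 memS memg memSg.
case/set0Pn=> [[t h]]; rewrite !in_setI !mem_lcoset.
rewrite -!andbA; case/and4P=> H1 H2 H3 H4.
move: H1 H2 H3 H4; rewrite !inE /=.
rewrite !invg1 !mul1g.
case/andP=> /andP[tS hH] /eqP th.
case/andP=> _ /eqP th2.
case/andP=> _ /eqP th3.
case/andP=> _ /eqP th4.
have hG : h \in G by apply: (subsetP sHG).
have mt : {in G &, {morph t : x y / x * y >-> x * y}}.
  by apply/morphicP; apply: Aut_morphic; apply: (subsetP sSA).
have ms : {in G &, {morph s : x y / x * y >-> x * y}}.
  by apply/morphicP; apply: Aut_morphic; apply: (subsetP sSA).
move: th2 th3 th4; rewrite !permM => th2 th3 th4.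
have tinj := @perm_inj _ t.
have sh : s^-1 h = h by apply: tinj; rewrite th2 th.
have shh : s h = h by rewrite -{1}sh permKV.
have tg : t (g^-1 * h) = g^-1 * h by [].
have e : s^-1 (g^-1 * h) = g^-1 * h by apply: tinj; rewrite th4 tg.
have e2 : s (g^-1 * h) = g^-1 * h by rewrite -{1}e permKV.
rewrite ms // shh in e2.
have e3 : s g^-1 = g^-1 by move/mulIg: e2.
have := ms _ _ gG ginvG; rewrite mulgV e3.
have s1 : s 1 = 1.
  have e1 := ms _ _ (group1 G) (group1 G).
  rewrite mulg1 in e1.
  by apply: (mulIg (s 1)); rewrite mul1g -e1.
rewrite s1 => /esym /eqP; rewrite mulg_eq1 => /eqP ->; by rewrite invgK.
Qed.
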